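(* Let $\langle W,\mathcal{N},V\rangle$ be an nIML1-model satisfying the $T$-condition (for all $w,v\in W$, $v\in\bigcup\mathcal{N}_w$ implies $\bigcap\mathcal{N}_v\subseteq\bigcup\mathcal{N}_w$). Then for every $w\in W$ the family $\mathcal{U}_w$ of $w$-open sets is a topology on $\bigcup\mathcal{N}_w$: it contains $\emptyset$ and $\bigcup\mathcal{N}_w$, and it is closed under arbitrary unions and under arbitrary intersections.
   Context: An nIML1-model is a triple $\langle W,\mathcal{N},V\rangle$ with $W\neq\emptyset$, $\mathcal{N}:W\to P(P(W))$ satisfying for all $w$: (a) $w\in\bigcap\mathcal{N}_w$; (b) $\bigcap\mathcal{N}_w\in\mathcal{N}_w$; (c) $u\in\bigcap\mathcal{N}_w\Rightarrow\bigcap\mathcal{N}_u\subseteq\bigcap\mathcal{N}_w$; (d) $\bigcap\mathcal{N}_w\subseteq X\subseteq\bigcup\mathcal{N}_w\Rightarrow X\in\mathcal{N}_w$; (e) $u\in\bigcap\mathcal{N}_w\Rightarrow\bigcup\mathcal{N}_u\subseteq\bigcup\mathcal{N}_w$, where $\bigcap\mathcal{N}_w$ and $\bigcup\mathcal{N}_w$ are the intersection and union of the family $\mathcal{N}_w$, and $V$ is a map from propositional variables to $P(W)$ with $w\in V(q)\Rightarrow\bigcap\mathcal{N}_w\subseteq V(q)$. A set $X\subseteq W$ is $w$-open iff $X\subseteq\bigcup\mathcal{N}_w$ and $\bigcap\mathcal{N}_v\subseteq X$ for every $v\in X$; $\mathcal{U}_w$ is the set of all $w$-open sets. (The intersection of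 the empty subfamily is understood as the whole space $\bigcup\mathcal{N}_w$.) *)

(* Defs.v *)
Set Implicit Arguments.

Section Defs.
Variable W : Type.

Definition subset (X Y : W -> Prop) : Prop := forall x, X x -> Y x.

Definition bigU (F : (W -> Prop) -> Prop) : W -> Prop :=
  fun x => exists X, F X /\ X x.
Definition bigI (F : (W -> Prop) -> Prop) : W -> Prop :=
  fun x => forall X, F X -> X x.

(* Intersection of a subfamily F relative to the space S:
   the intersection of the empty family is the whole space S. *)
Definition bigI_in (S : W -> Prop) (F : (W -> Prop) -> Prop) : W -> Prop :=
  fun x => S x /\ forall X, F X -> X x.

Definition set0 : W -> Prop := fun _ => False.

Definition nIML1_model (N : W -> (W -> Prop) -> Prop) (V : nat -> W -> Prop)
  : Prop :=
  inhabited W /\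
  (forall w,
     bigI (N w) w /\
     N w (bigI (N w)) /\
     (forall u, bigI (N w) u -> subset (bigI (N u)) (bigI (N w))) /\
     (forall X, subset (bigI (N w)) X -> subset X (bigU (N w)) -> N w X) /\
     (forall u, bigI (N w) u -> subset (bigU (N u)) (bigU (N w)))) /\
  (forall q w, V q w -> subset (bigI (N w)) (V q)).

Definition T_condition (N : W -> (W -> Prop) -> Prop) : Prop :=
  forall w v, bigU (N w) v -> subset (bigI (N v)) (bigU (N w)).

Definition w_open (N : W -> (W -> Prop) -> Prop) (w : W) (X : W -> Prop)
  : Prop :=
  subset X (bigU (N w)) /\ forall v, X v -> subset (bigI (N v)) X.

End Defs.

(* Main.v *)
Require Import Defs.

Theorem theorem10p1 (W : Type) (N : W -> (W -> Prop) -> Prop)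
  (V : nat -> W -> Prop) :
  nIML1_model N V -> T_condition N ->
  forall w : W,
    w_open N w (@set0 W) /\
    w_open N w (bigU (N w)) /\
    (forall F : (W -> Prop) -> Prop,
       (forall X, F X -> w_open N w X) -> w_open N w (bigU F)) /\
    (forall F : (W -> Prop) -> Prop,
       (forall X, F X -> w_open N w X) ->
       w_open N w (bigI_in (bigU (N w)) F)).
Proof.
  intros _ HT w.
  unfold w_open, subset, bigU, bigI, bigI_in, set0, T_condition in *.
  split; [|split; [|split]].
  - split; intros; contradiction.
  - split; [auto|]. intros v Hv u Hu. exact (HT w v Hv u Hu).
  - intros F HF. split.
    + intros x [X [FX Xx]]. exact (proj1 (HF X FX) x Xx).
    + intros v [X [FX Xv]] u Hu. exists X. split; [exact FX|].
      exact (proj2 (HF X FX) v Xv u Hu).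
  - intros F HF. split.
    + intros x [Sx _]. exact Sx.
    + intros v [Sv Hv] u Hu. split.
      * exact (HT w v Sv u Hu).
      * intros X FX. exact (proj2 (HF X FX) v (Hv X FX) u Hu).
Qed.
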